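(* Let $P\subset\mathbb{R}^d$ be a polytope, let $0<\gamma<1$, and let $\mathcal{X}=\{\mathbf{x}\in\mathbb{R}^d:\|\mathbf{x}\|\le1\}$. Suppose $P^{[-\gamma]}\cap\mathcal{X}\neq\emptyset$. Then $\partial P^{[\gamma^2/2]}\cap\mathcal{X}\subseteq\partial P^{(\gamma)}$.
   Context: Write $P=\{\mathbf{x}:\mathbf{w}_i\cdot\mathbf{x}+b_i\ge0\ \forall i\}$ where the halfspaces $\{\mathbf{w}_i\cdot\mathbf{x}+b_i\ge0\}$, $\|\mathbf{w}_i\|=1$, are those defining the facets of $P$. For $\alpha>0$: $P^{[+\alpha]}=\{\mathbf{x}:\mathbf{w}_i\cdot\mathbf{x}+b_i\ge-\alpha\ \forall i\}$ (each facet halfspace moved outward by $\alpha$), $P^{[-\alpha]}=\{\mathbf{x}:\mathbf{w}_i\cdot\mathbf{x}+b_i\ge\alpha\ \forall i\}$ (moved inward by $\alpha$). With $B_\alpha=\{\mathbf{p}:\|\mathbf{p}\|\le\alpha\}$, $P^{(+\alpha)}=P+B_\alpha$ (Minkowski sum) and $P^{(-\alpha)}=P-B_\alpha=\{\mathbf{p}:\{\mathbf{p}\}+B_\alpha\subseteq P\}$. The $\alpha$-margin of $P$ is $\partial P^{[\alpha]}=P^{[+\alpha]}\setminus P^{[-\alpha]}$ and the $\alpha$-envelope of $P$ is $\partial P^{(\alpha)}=P^{(+\alpha)}\setminus P^{(-\alpha)}$. *)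

(* Defs.v *)
From HB Require Import structures.
From mathcomp Require Import all_boot all_order all_algebra.
From mathcomp Require Import boolp classical_sets reals.
Set Implicit Arguments. Unset Strict Implicit. Unset Printing Implicit Defensive.
Import Order.TTheory GRing.Theory Num.Theory.
Local Open Scope ring_scope.
Local Open Scope classical_set_scope.

Section Defs.
Variables (R : realType) (d : nat).
Local Notation vec := 'rV[R]_d.

Definition dotv (u v : vec) : R := \sum_(i < d) u ord0 i * v ord0 i.
Definition enorm (u : vec) : R := Num.sqrt (dotv u u).

Definition ball0 (a : R) : set vec := [set p | enorm p <= a].

Definition polytope (P : set vec) : Prop :=
  exists (n : nat) (v : 'I_n -> vec),
    P = [set x | exists l : 'I_n -> R,
           (forall i, 0 <= l i) /\ \sum_(i < n) l i = 1 /\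
           x = \sum_(i < n) l i *: v i].

Definition aff_indep (k : nat) (p : 'I_k -> vec) : Prop :=
  forall c : 'I_k -> R, \sum_(i < k) c i = 0 ->
    \sum_(i < k) c i *: p i = 0 -> forall i, c i = 0.

(* {x : w.x + b >= 0} with ||w|| = 1 is the halfspace defining a facet of P:
   it contains P and its boundary hyperplane meets P in a face of affine
   dimension d-1 (i.e. containing d affinely independent points). *)
Definition facet_halfspace (P : set vec) (w : vec) (b : R) : Prop :=
  enorm w = 1 /\ (forall x, P x -> 0 <= dotv w x + b) /\
  exists p : 'I_d -> vec,
    (forall i, P (p i) /\ dotv w (p i) + b = 0) /\ aff_indep p.

Definition shift_out (P : set vec) (a : R) : set vec :=
  [set x | forall w b, facet_halfspace P w b -> - a <= dotv w x + b].
Definition shift_in (P : set vec) (a : R) : set vec :=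
  [set x | forall w b, facet_halfspace P w b -> a <= dotv w x + b].

Definition mink_plus (P : set vec) (a : R) : set vec :=
  [set x | exists p q, P p /\ ball0 a q /\ x = p + q].
Definition mink_minus (P : set vec) (a : R) : set vec :=
  [set p | forall q, ball0 a q -> P (p + q)].

Definition margin (P : set vec) (a : R) : set vec := shift_out P a `\` shift_in P a.
Definition envelope (P : set vec) (a : R) : set vec := mink_plus P a `\` mink_minus P a.

End Defs.

(* Main.v *)
Require Import Defs.
From HB Require Import structures.
From mathcomp Require Import all_boot all_order all_algebra.
From mathcomp Require Import boolp classical_sets reals.
From mathcomp Require Import topology normedtype derive.
From mathcomp Require Import lra ring.
Require Import Defs.
Import Order.TTheory GRing.Theory Num.Theory numFieldNormedType.Exports.
Local Open Scope ring_scope.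
Local Open Scope classical_set_scope.
Set Implicit Arguments. Unset Strict Implicit.


Section Aux.
Variables (R : realType) (d : nat).
Local Notation vec := 'rV[R]_d.
Local Notation dot := (@dotv R d).

Lemma dotvC (u v : vec) : dot u v = dot v u.
Proof. by rewrite /dotv; apply: eq_bigr => i _; rewrite mulrC. Qed.

Lemma dotvDl (u v w : vec) : dot (u + v) w = dot u w + dot v w.
Proof. by rewrite /dotv -big_split; apply: eq_bigr => i _; rewrite mxE mulrDl. Qed.

Lemma dotvZl a (u w : vec) : dot (a *: u) w = a * dot u w.
Proof. by rewrite /dotv mulr_sumr; apply: eq_bigr => i _; rewrite mxE mulrA. Qed.

Lemma dotv0l (w : vec) : dot 0 w = 0.
Proof. by rewrite /dotv big1 // => i _; rewrite mxE mul0r. Qed.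

Lemma dotvNl (u w : vec) : dot (- u) w = - dot u w.
Proof. by rewrite -scaleN1r dotvZl mulN1r. Qed.

Lemma dotvBl (u v w : vec) : dot (u - v) w = dot u w - dot v w.
Proof. by rewrite dotvDl dotvNl. Qed.

Lemma dotvDr (u v w : vec) : dot w (u + v) = dot w u + dot w v.
Proof. by rewrite dotvC dotvDl !(dotvC w). Qed.
Lemma dotvZr a (u w : vec) : dot w (a *: u) = a * dot w u.
Proof. by rewrite dotvC dotvZl dotvC. Qed.
Lemma dotvBr (u v w : vec) : dot w (u - v) = dot w u - dot w v.
Proof. by rewrite dotvC dotvBl !(dotvC w). Qed.
Lemma dotv0r (w : vec) : dot w 0 = 0.
Proof. by rewrite dotvC dotv0l. Qed.

Lemma dotv_suml k (F : 'I_k -> vec) w :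
  dot (\sum_(i < k) F i) w = \sum_(i < k) dot (F i) w.
Proof.
exact: (big_morph (fun u => dot u w) (fun u v => dotvDl u v w) (dotv0l w)).
Qed.
Lemma dotv_sumr k (F : 'I_k -> vec) w :
  dot w (\sum_(i < k) F i) = \sum_(i < k) dot w (F i).
Proof.
rewrite dotvC dotv_suml; apply: eq_bigr => i _; exact: dotvC.
Qed.

Lemma dotv_ge0 (u : vec) : 0 <= dot u u.
Proof. by apply: sumr_ge0 => i _; rewrite -expr2 sqr_ge0. Qed.

Lemma dotv_eq0 (u : vec) : dot u u = 0 -> u = 0.
Proof.
move=> h; apply/rowP => j; rewrite mxE.
have := @psumr_eq0P _ _ predT (fun i => u ord0 i * u ord0 i).
move=> /(_ (fun i _ => ltac:(by rewrite -expr2 sqr_ge0))) /(_ h j isT) /eqP.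
by rewrite mulf_eq0 orbb => /eqP.
Qed.


Lemma ker_nz m k (A : 'M[R]_(m, k)) : (k < m)%N -> exists c : 'rV[R]_m, c != 0 /\ c *m A = 0.
Proof.
move=> km.
have hK : kermx A != 0.
  apply/eqP => h0; have := mxrank_ker A; rewrite h0 mxrank0 => /esym/eqP.
  rewrite subn_eq0 => h; have := rank_leq_col A => h2.
  by move: (leq_trans h h2); rewrite leqNgt km.
have [i hi] : exists i, row i (kermx A) != 0.
  apply/existsP; apply: contraT; rewrite negb_exists => /forallP h.
  suff h0 : kermx A = 0 by rewrite h0 eqxx in hK.
  apply/row_matrixP => i.
  by have := h i; rewrite negbK row0 => /eqP.
by exists (row i (kermx A)); split => //; rewrite -row_mul mulmx_ker row0.
Qed.

Definition inaff k (a : 'I_k -> vec) (x : vec) :=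
  exists mu : 'I_k -> R, \sum_(i < k) mu i = 1 /\ x = \sum_(i < k) mu i *: a i.
Arguments inaff {k}.

Lemma aff_small k (a : 'I_k -> vec) (p : 'I_d -> vec) : (k < d)%N ->
  (forall j, inaff a (p j)) -> ~ aff_indep p.
Proof.
move=> kd hp hind.
have [mu hmu] := fin_all_exists hp.
have [c [cn0 hc]] := ker_nz (\matrix_(j, m) mu j m) kd.
have hc' m : \sum_(j < d) c ord0 j * mu j m = 0.
  transitivity ((c *m \matrix_(j, m) mu j m) ord0 m); last by rewrite hc mxE.
  by rewrite mxE; apply: eq_bigr => j _; rewrite mxE.
have := hind (fun j => c ord0 j).
have h1 : \sum_(i < d) c ord0 i = 0.
  transitivity (\sum_(i < d) \sum_(m < k) c ord0 i * mu i m).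
    by apply: eq_bigr => i _; rewrite -mulr_sumr (proj1 (hmu i)) mulr1.
  by rewrite exchange_big /= big1 // => m _; apply: hc'.
have h2 : \sum_(i < d) c ord0 i *: p i = 0.
  transitivity (\sum_(i < d) \sum_(m < k) (c ord0 i * mu i m) *: a m).
    apply: eq_bigr => i _; rewrite (proj2 (hmu i)) scaler_sumr.
    by apply: eq_bigr => m _; rewrite scalerA.
  rewrite exchange_big /= big1 // => m _.
  by rewrite -scaler_suml hc' scale0r.
move=> /(_ h1 h2) hz; move: cn0; apply/negP; rewrite negbK; apply/eqP/rowP => j.
by rewrite mxE; apply: hz.
Qed.

Definition ext k (a : 'I_k -> vec) (v : vec) (i : 'I_k.+1) : vec :=
  match unlift ord_max i with Some j => a j | None => v end.
Arguments ext {k}.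

Lemma sum_ext (V : zmodType) k (F : 'I_k.+1 -> V) :
  \sum_(i < k.+1) F i = \sum_(i < k) F (lift ord_max i) + F ord_max.
Proof.
rewrite big_ord_recr /=; congr (_ + _); apply: eq_bigr => i _; congr (F _); apply: val_inj; by rewrite /= /bump leqNgt ltn_ord.
Qed.

Lemma ext_lift k (a : 'I_k -> vec) v i : ext a v (lift ord_max i) = a i.
Proof. by rewrite /ext liftK. Qed.
Lemma ext_max k (a : 'I_k -> vec) v : ext a v ord_max = v.
Proof. by rewrite /ext unlift_none. Qed.

Lemma aff_ext k (a : 'I_k -> vec) v : aff_indep a -> ~ inaff a v ->
  aff_indep (ext a v).
Proof.
move=> ha hv c; rewrite !sum_ext ext_max => hs hs2.
have {}hs2 : \sum_(i < k) c (lift ord_max i) *: a i + c ord_max *: v = 0.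
  by apply: etrans hs2; congr (_ + _); apply: eq_bigr => i _; rewrite ext_lift.
have hK : c ord_max = 0.
  apply/eqP; apply: contraT => hK; exfalso; apply: hv.
  exists (fun i => - c (lift ord_max i) / c ord_max); split.
    rewrite -mulr_suml sumrN; move/eqP: hs; rewrite addr_eq0 => /eqP ->.
    by rewrite opprK divff.
  apply: (scalerI hK); rewrite scaler_sumr.
  have -> : c ord_max *: v = - \sum_(i < k) c (lift ord_max i) *: a i.
    by apply/eqP; rewrite -addr_eq0 addrC hs2.
  rewrite -sumrN; apply: eq_bigr => i _; rewrite scalerA.
  by rewrite mulrCA divff // mulr1 scaleNr.
move: hs hs2; rewrite hK scale0r !addr0 => hs hs2.
have hz := ha (fun i => c (lift ord_max i)) hs hs2.
move=> i; case: (unliftP ord_max i) => [j ->|->] //.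
Qed.

Lemma inaff_pt k (a : 'I_k -> vec) m : inaff a (a m).
Proof.
exists (fun i => (i == m)%:R); split.
  by rewrite (bigD1 m) //= eqxx big1 ?addr0 // => i /negbTE ->.
by rewrite (bigD1 m) //= eqxx scale1r big1 ?addr0 // => i /negbTE ->; rewrite scale0r.
Qed.

Lemma inaff_dot k (a : 'I_k -> vec) w b x :
  (forall m, dot w (a m) = b) -> inaff a x -> dot w x = b.
Proof.
move=> h [mu [h1 ->]]; rewrite dotv_sumr.
under eq_bigr => i _ do rewrite dotvZr h.
by rewrite -mulr_suml h1 mul1r.
Qed.

Lemma inaff_comb k n (a : 'I_k -> vec) (v : 'I_n -> vec) (l : 'I_n -> R) :
  (forall i, inaff a (v i)) -> \sum_(i < n) l i = 1 ->
  inaff a (\sum_(i < n) l i *: v i).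
Proof.
move=> hv hl; have [mu hmu] := fin_all_exists hv.
exists (fun m => \sum_(i < n) l i * mu i m); split.
  rewrite exchange_big /= -hl; apply: eq_bigr => i _.
  by rewrite -mulr_sumr (proj1 (hmu i)) mulr1.
under eq_bigr => i _ do rewrite (proj2 (hmu i)) scaler_sumr.
rewrite exchange_big /=; apply: eq_bigr => m _; rewrite scaler_suml.
by apply: eq_bigr => i _; rewrite scalerA.
Qed.

End Aux.


Lemma cont_sum (R : realType) (T : topologicalType) k (F : 'I_k -> T -> R) :
  (forall i, continuous (F i)) -> continuous (fun x => \sum_(i < k) F i x).
Proof.
move=> h.
suff H : forall s : seq 'I_k, continuous (fun x => \sum_(i <- s) F i x).
  exact: H.
elim => [|i s IH].
  by under eq_fun do rewrite big_nil; exact: cst_continuous.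
under eq_fun do rewrite big_cons.
by move=> x; apply: continuousD; [exact: h|exact: IH].
Qed.

Section Sep.
Variables (R : realType) (d : nat).
Local Notation vec := 'rV[R]_d.
Local Notation dot := (@dotv R d).

Lemma quad_ineq (ub bb : R) :
  0 <= bb -> (forall s, 0 < s < 1 -> 0 <= s * s * bb - 2 * s * ub) -> ub <= 0.
Proof.
move=> hb h; rewrite leNgt; apply/negP => hu.
have hpos : 0 < ub + ub + bb by lra.
set s := ub / (ub + ub + bb).
have hs0 : 0 < s by rewrite divr_gt0.
have hs1 : s < 1 by rewrite ltr_pdivrMr // mul1r; lra.
have := h s; rewrite hs0 hs1 => /(_ isT).
have e : s * (ub + ub + bb) = ub by rewrite mulrVK ?unitfE ?gt_eqF.
nra.
Qed.

Lemma sep n (v : 'I_n -> vec) (z : vec) :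
  ~ (exists l : 'I_n -> R, (forall i, 0 <= l i) /\ \sum_(i < n) l i = 1 /\
        z = \sum_(i < n) l i *: v i) ->
  exists u, forall i, dot u (v i) < dot u z.
Proof.
case: n v => [|n] v hz; first by exists 0 => -[].
pose g (L : 'rV[R]_n.+1) := \sum_(i < n.+1) L ord0 i.
pose comb (L : 'rV[R]_n.+1) := \sum_(i < n.+1) L ord0 i *: v i.
pose f (L : 'rV[R]_n.+1) := dot (z - comb L) (z - comb L).
pose S := [set L : 'rV[R]_n.+1 | forall i, `[0, 1] (L ord0 i)] `&` (g @^-1` [set x | x = 1]).
have gc : continuous g.
  by apply: cont_sum => i; apply: coord_continuous.
have cS : compact S.
  apply: compact_closedI; first exact: (@rV_compact R _ (fun=> `[0, 1]%classic) (fun=> @segment_compact R 0 1)).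
  exact: (proj1 (continuous_closedP g) gc [set x | x = 1] (@closed_eq _ 1)).
have fc : continuous f.
  have -> : f = fun L => \sum_(j < d) (z ord0 j - \sum_(i < n.+1) L ord0 i * v i ord0 j) *
                           (z ord0 j - \sum_(i < n.+1) L ord0 i * v i ord0 j).
    apply: funext => L; rewrite /f /dotv; apply: eq_bigr => j _.
    by rewrite !mxE /comb summxE; under eq_bigr do rewrite mxE.
  have hin : forall j i, continuous (fun L : 'rV[R]_n.+1 => L ord0 i * v i ord0 j).
    by move=> j i x; apply: continuousM; [exact: coord_continuous | exact: cst_continuous].
  have hs : forall j, continuous (fun L : 'rV[R]_n.+1 => \sum_(i < n.+1) L ord0 i * v i ord0 j).
    move=> j; exact: (@cont_sum _ _ _ _ (hin j)).
  have hb : forall j, continuous (fun L : 'rV[R]_n.+1 => z ord0 j - \sum_(i < n.+1) L ord0 i * v i ord0 j).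
    move=> j x; apply: continuousB; [exact: cst_continuous | exact: hs].
  have hj : forall j, continuous (fun L : 'rV[R]_n.+1 => (z ord0 j - \sum_(i < n.+1) L ord0 i * v i ord0 j) *
                           (z ord0 j - \sum_(i < n.+1) L ord0 i * v i ord0 j)).
    move=> j x; exact: (continuousM (hb j x) (hb j x)).
  exact: (@cont_sum _ _ _ _ hj).
have S0 : S !=set0.
  exists (\row_i ((i == ord0)%:R : R)); split.
    by move=> i /=; rewrite in_itv /= mxE; case: eqP => _; rewrite ?lexx ?ler01.
  rewrite /= /g (bigD1 ord0) //= mxE eqxx big1 ?addr0 // => i /negbTE.
  by rewrite mxE => ->.
have [Lm Sm hmin] := compact_EVT_min S0 cS (continuous_subspaceT fc).
rewrite in_setE in Sm; case: Sm => Lm01 gLm.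
set c := comb Lm.
have key : forall j, dot (z - c) (v j - c) <= 0.
  move=> j; apply: (quad_ineq (dotv_ge0 (v j - c))) => s /andP [s0 s1].
  pose Ls := (1 - s) *: Lm + s *: \row_i ((i == j)%:R : R).
  have SLs : S Ls.
    split.
      move=> i /=; rewrite in_itv /= !mxE; have := Lm01 i; rewrite /= in_itv /= => /andP [a1 a2].
      by case: eqP => _; rewrite ?mulr1 ?mulr0 ?addr0; apply/andP; split; nra.
    rewrite /= /g; under eq_bigr do rewrite !mxE; rewrite big_split /= -!mulr_sumr.
    move: gLm; rewrite /= /g => ->; rewrite (bigD1 j) //= eqxx big1 ?addr0 => [|i /negbTE -> //].
    by rewrite !mulr1 subrK.
  have := hmin Ls (mem_set SLs); rewrite /f -/c.
  have -> : comb Ls = (1 - s) *: c + s *: v j.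
    rewrite /comb /c /comb; under eq_bigr do rewrite !mxE scalerDl -!scalerA.
    rewrite big_split /= -!scaler_sumr; congr (_ + _); congr (_ *: _).
    rewrite (bigD1 j) //= eqxx scale1r big1 ?addr0 // => i /negbTE ->; by rewrite scale0r.
  have -> : z - ((1 - s) *: c + s *: v j) = (z - c) - s *: (v j - c).
    by apply/rowP => k; rewrite !mxE; ring.
  rewrite !(dotvBl, dotvBr, dotvZl, dotvZr) (dotvC (v j) z) (dotvC (v j) c) (dotvC c z).
  nra.
set u := z - c.
have hu : u != 0.
  apply/eqP => hu0; apply: hz; exists (fun i => Lm ord0 i); split.
    by move=> i; have := Lm01 i; rewrite /= in_itv /= => /andP [].
  split; first exact: gLm.
  by apply/eqP; rewrite -subr_eq0 -/u hu0.
have uu : 0 < dot u u.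
  rewrite lt_neqAle dotv_ge0 andbT eq_sym; apply/eqP => h; move/eqP: hu; apply; exact: dotv_eq0.
exists u => i.
have := key i; rewrite -/u dotvBr.
have -> : z = u + c by rewrite /u subrK.
rewrite dotvDr; lra.
Qed.

End Sep.


Section Rot.
Variables (R : realType) (d n : nat) (v : 'I_n -> 'rV[R]_d) (z : 'rV[R]_d).
Local Notation vec := 'rV[R]_d.
Local Notation dot := (@dotv R d).

Definition inconv (x : vec) := exists l : 'I_n -> R,
  (forall i, 0 <= l i) /\ \sum_(i < n) l i = 1 /\ x = \sum_(i < n) l i *: v i.

Lemma inconv_v i : inconv (v i).
Proof.
exists (fun j => (j == i)%:R); split; first by move=> j; rewrite ler0n.
split; first by rewrite (bigD1 i) //= eqxx big1 ?addr0 // => j /negbTE ->.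
by rewrite (bigD1 i) //= eqxx scale1r big1 ?addr0 // => j /negbTE ->; rewrite scale0r.
Qed.

Lemma conv_le u b x : (forall i, dot u (v i) <= b) -> inconv x -> dot u x <= b.
Proof.
move=> h [l [l0 [l1 ->]]]; rewrite dotv_sumr.
rewrite -[leRHS]mul1r -l1 mulr_suml; apply: ler_sum => i _.
by rewrite dotvZr ler_wpM2l.
Qed.

Lemma not_all_aff k (a : 'I_k -> vec) : (k < d)%N ->
  (exists p : 'I_d -> vec, (forall j, inconv (p j)) /\ aff_indep p) ->
  exists i, ~ inaff a (v i).
Proof.
move=> kd [p [hp hind]]; apply: contrapT => hn.
have hall : forall i, inaff a (v i).
  by move=> i; apply: contrapT => h; apply: hn; exists i.
apply: (aff_small kd _ hind) => j.
by have [l [_ [l1 ->]]] := hp j; apply: inaff_comb.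
Qed.

Definition exti k (a : 'I_k -> 'I_n) (i : 'I_n) (j : 'I_k.+1) : 'I_n :=
  match unlift ord_max j with Some j' => a j' | None => i end.

Lemma exti_v k (a : 'I_k -> 'I_n) i : v \o exti a i = ext (v \o a) (v i).
Proof. by apply: funext => j; rewrite /exti /ext /=; case: unlift. Qed.

Definition goodH k (a : 'I_k -> 'I_n) (u : vec) (b : R) :=
  [/\ aff_indep (v \o a), u != 0, (forall j, dot u (v (a j)) = b),
      (forall i, dot u (v i) <= b) & b <= dot u z].

Lemma goodH_ext k (a : 'I_k -> 'I_n) u b i :
  goodH a u b -> dot u (v i) = b -> ~ inaff (v \o a) (v i) ->
  goodH (exti a i) u b.
Proof.
case=> h1 h2 h3 h4 h5 hi hn; split => //.
  by rewrite exti_v; apply: aff_ext.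
by move=> j; rewrite /exti; case: unlift.
Qed.


Lemma dot_pos (u : vec) : u != 0 -> 0 < dot u u.
Proof.
move=> hu; rewrite lt_neqAle dotv_ge0 andbT eq_sym; apply/eqP => h.
by move/eqP: hu; apply; exact: dotv_eq0.
Qed.

Lemma goodH_facet (a : 'I_d -> 'I_n) u b : goodH a u b ->
  exists w c, facet_halfspace inconv w c /\ dot w z + c <= 0.
Proof.
case=> h1 h2 h3 h4 h5.
have uu := dot_pos h2.
set N := Num.sqrt (dot u u).
have N0 : 0 < N by rewrite sqrtr_gt0.
have NN : N * N = dot u u by rewrite -expr2 sqr_sqrtr // ltW.
have key x : dot ((- N^-1) *: u) x + b / N = (b - dot u x) / N.
  by rewrite dotvZl mulrBl mulNr addrC [N^-1 * _]mulrC.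
exists ((- N^-1) *: u), (b / N); split; last first.
  by rewrite key pmulr_lle0 ?invr_gt0 // subr_le0.
split.
  rewrite /enorm dotvZl dotvZr mulrA mulrNN -NN.
  rewrite (_ : N^-1 / N * (N * N) = 1) ?sqrtr1 //; field; exact: lt0r_neq0.
split.
  move=> x hx; rewrite key divr_ge0 ?(ltW N0) // subr_ge0.
  exact: conv_le.
exists (fun j => v (a j)); split; last exact: h1.
by move=> i; split; [exact: inconv_v | rewrite key h3 subrr mul0r].
Qed.


Definition Hfull := exists p : 'I_d -> vec, (forall j, inconv (p j)) /\ aff_indep p.

Lemma rotH m : forall k (a : 'I_k -> 'I_n) u b, (d - k)%N = m -> (0 < k)%N -> (k <= d)%N ->
  Hfull -> goodH a u b ->
  exists w c, facet_halfspace inconv w c /\ dot w z + c <= 0.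
Proof.
elim: m => [|m IH] k a u b hm k0 kd hf hg.
  have ekd : k = d by apply/eqP; rewrite eqn_leq kd -subn_eq0 hm.
  subst k; exact: goodH_facet hg.
have kd' : (k < d)%N by rewrite -subn_gt0 hm.
have hstep : forall u' b' i, goodH a u' b' -> dot u' (v i) = b' -> ~ inaff (v \o a) (v i) ->
    exists w c, facet_halfspace inconv w c /\ dot w z + c <= 0.
  move=> u' b' i hg' hi hn.
  apply: (IH k.+1 (exti a i) u' b') => //; first by rewrite subnS hm.
  exact: goodH_ext.
have [[i [hi hn]]|hB] := pselect (exists i, dot u (v i) = b /\ ~ inaff (v \o a) (v i)).
  exact: hstep hg hi hn.
have hB' : forall i, dot u (v i) = b -> inaff (v \o a) (v i).
  by move=> i hi; apply: contrapT => hn; apply: hB; exists i.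
have [i0 hi0] := not_all_aff (v \o a) kd' hf.
case: hg => h1 h2 h3 h4 h5.
have ai0 : dot u (v i0) < b.
  rewrite lt_neqAle h4 andbT; apply/eqP => e; exact: hi0 (hB' _ e).
pose a0 := v (a (Ordinal k0)).
pose col (mm : 'I_k) := if (mm == Ordinal k0) then u else v (a mm) - a0.
have [r [rn0 hr]] := ker_nz (\matrix_(jj < d, mm < k) col mm ord0 jj) kd'.
have hrc mm : dot r (col mm) = 0.
  transitivity ((r *m \matrix_(jj, mm) col mm ord0 jj) ord0 mm); last by rewrite hr mxE.
  by rewrite mxE; apply: eq_bigr => jj _; rewrite mxE.
have ru : dot r u = 0 by have := hrc (Ordinal k0); rewrite /col eqxx.
have ra mm : dot r (v (a mm)) = dot r a0.
  have := hrc mm; rewrite /col; case: eqP => [->|_]; first by rewrite /a0.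
  by rewrite dotvBr => /eqP; rewrite subr_eq0 => /eqP.
have ua0 : dot u a0 = b by rewrite /a0 h3.
pose al i := dot u (v i) - b.
pose rh i := dot r (v i) - dot r a0.
have hal0 i : al i = 0 -> rh i = 0.
  move=> e; have /hB' hi : dot u (v i) = b by apply/eqP; rewrite -subr_eq0; apply/eqP.
  by rewrite /rh (inaff_dot (w := r) (b := dot r a0) ra hi) subrr.
have hal i : al i <= 0 by rewrite /al subr_le0.
pose mv i := rh i / (- al i).
have hmv i : al i < 0 -> rh i = mv i * (- al i).
  by move=> hi; rewrite /mv mulfVK // oppr_eq0 lt_eqF.
have Pi0 : al i0 < 0 by rewrite /al subr_lt0.
case: (@arg_maxP _ R _ i0 (fun i => al i < 0) mv Pi0) => ip hip hmax.
case: (@arg_minP _ R _ i0 (fun i => al i < 0) mv Pi0) => im him hmin.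
have notaff i : al i < 0 -> ~ inaff (v \o a) (v i).
  move=> hi ha; move: hi; rewrite /al (inaff_dot (w := u) (b := b) h3 ha) subrr ltxx //.
have rr := dot_pos rn0.
have gen : forall (c1 c2 : R) i, c2 != 0 -> al i < 0 ->
    (forall j, c1 * al j + c2 * rh j <= 0) -> c1 * al i + c2 * rh i = 0 ->
    0 <= c1 * (dot u z - b) + c2 * (dot r z - dot r a0) ->
    exists w c, facet_halfspace inconv w c /\ dot w z + c <= 0.
  move=> c1 c2 i c20 hi hall htight hz.
  pose u' := c1 *: u + c2 *: r.
  have hu' x : dot u' x - dot u' a0 = c1 * (dot u x - b) + c2 * (dot r x - dot r a0).
    by rewrite /u' !dotvDl !dotvZl ua0; ring.
  apply: (hstep u' (dot u' a0) i) => //; last exact: notaff.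
    split => //.
    - apply/eqP => e; move: (congr1 (dot r) e); rewrite dotv0r /u' dotvDr !dotvZr ru mulr0 add0r.
      by move/eqP; rewrite mulf_eq0 (negbTE c20) /= gt_eqF.
    - move=> j; apply/eqP; rewrite -subr_eq0 hu' (h3 j) subrr mulr0 ra subrr mulr0 addr0; done.
    - by move=> j; rewrite -subr_le0 hu'; exact: hall.
    - by rewrite -subr_ge0 hu'.
  by apply/eqP; rewrite -subr_eq0 hu'; apply/eqP; exact: htight.
have hz0 : 0 <= dot u z - b by rewrite subr_ge0.
have mmp : mv im <= mv ip by apply: hmax.
have [hzp|hzm] := lerP 0 (mv ip * (dot u z - b) + 1 * (dot r z - dot r a0)).
  apply: (gen (mv ip) 1 ip) => //; first exact: oner_neq0.
    move=> j; have [hj|hj] := ltrP (al j) 0.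
      rewrite mul1r (hmv j hj); have := hmax j hj; rewrite /= => hle; nra.
    have e : al j = 0 by apply/eqP; rewrite eq_le hal.
    by rewrite e (hal0 j e) !mulr0 addr0.
  by rewrite mul1r (hmv ip hip); ring.
apply: (gen (- mv im) (-1) im) => //.
- by rewrite oppr_eq0 oner_neq0.
- move=> j; have [hj|hj] := ltrP (al j) 0.
    rewrite mulN1r (hmv j hj); have := hmin j hj; rewrite /= => hle; nra.
  have e : al j = 0 by apply/eqP; rewrite eq_le hal.
    by rewrite e (hal0 j e) !mulr0 addr0.
- by rewrite mulN1r (hmv im him); ring.
- nra.
Qed.

End Rot.


Lemma enorm_le1 (R : realType) d (x : 'rV[R]_d) (g : R) : 0 <= g ->
  enorm x <= g -> dotv x x <= g ^+ 2.
Proof.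
move=> g0 h; rewrite -(sqr_sqrtr (dotv_ge0 x)); rewrite -/(enorm x).
by rewrite lerXn2r // ?nnegrE ?sqrtr_ge0.
Qed.

Lemma enorm_le2 (R : realType) d (x : 'rV[R]_d) (g : R) : 0 <= g ->
  dotv x x <= g ^+ 2 -> enorm x <= g.
Proof.
move=> g0 h; rewrite /enorm -(ger0_norm g0) -sqrtr_sqr ler_sqrt //.
by rewrite sqr_ge0.
Qed.

Unset Implicit Arguments. Set Strict Implicit.

Theorem theorem11 (R : realType) (d : nat) (P : set 'rV[R]_d) (gamma : R) :
  polytope P -> 0 < gamma -> gamma < 1 ->
  shift_in P gamma `&` (ball0 1 : set 'rV[R]_d) !=set0 ->
  margin P (gamma ^+ 2 / 2) `&` (ball0 1 : set 'rV[R]_d) `<=` envelope P gamma.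
Proof.
move=> [n [v hP]] g0 g1 [y [hy hy1]] x [[hxo hxi] hx1].
have [w0 [b0 [hf0 hlt]]] : exists w b, facet_halfspace P w b /\ dotv w x + b < gamma ^+ 2 / 2.
  apply: contrapT => hn; apply: hxi => w b hf; rewrite leNgt; apply/negP => hl.
  by apply: hn; exists w, b.
have ww0 : dotv w0 w0 = 1.
  by case: hf0 => /eqP h _; rewrite -(sqr_sqrtr (dotv_ge0 w0)) -/(enorm w0) (eqP h) expr1n.
have xx1 : dotv x x <= 1 by rewrite -(expr1n _ 2); apply: enorm_le1.
have yy1 : dotv y y <= 1 by rewrite -(expr1n _ 2); apply: enorm_le1.
split; last first.
  move=> hm.
  have hq : ball0 gamma ((- gamma) *: w0).
    apply: enorm_le2; first exact: ltW.
    by rewrite dotvZl dotvZr ww0 mulr1 mulrNN expr2.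
  have := hm _ hq; case: hf0 => _ [hpos _] /hpos.
  rewrite dotvDr dotvZr ww0 mulr1 => h.
  have : gamma <= dotv w0 x + b0 by lra.
  nra.
pose z := x + (gamma / 2) *: (y - x).
exists z, (x - z); split; last first.
  split; last by rewrite addrC subrK.
  apply: enorm_le2; first exact: ltW.
  have -> : x - z = (- (gamma / 2)) *: (y - x) by rewrite /z opprD addrA subrr add0r scaleNr.
  rewrite dotvZl dotvZr !dotvBl !dotvBr (dotvC y x).
  have := dotv_ge0 (y + x); rewrite !dotvDl !dotvDr (dotvC y x) => hyx.
  have hg2 : (gamma / 2) * (gamma / 2) * 4 = gamma ^+ 2 by field.
  nra.
have zpos : forall w b, facet_halfspace P w b -> 0 < dotv w z + b.
  move=> w b hf.
  have h1 := hxo w b hf; have h2 := hy w b hf.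
  rewrite /z dotvDr dotvZr dotvBr.
  move: h1 h2; set A := dotv w x; set B := dotv w y => h1 h2.
  have p1 : 0 <= (1 - gamma / 2) * (A + b + gamma ^+ 2 / 2) by apply: mulr_ge0; lra.
  have p2 : 0 <= (gamma / 2) * (B + b - gamma) by apply: mulr_ge0; lra.
  have p3 : 0 < gamma ^+ 3 by rewrite exprn_gt0.
  have e : A + gamma / 2 * (B - A) + b = (1 - gamma / 2) * (A + b + gamma ^+ 2 / 2) + (gamma / 2) * (B + b - gamma) + gamma ^+ 3 / 4.
    by field.
  rewrite e; lra.
have d0 : (0 < d)%N.
  rewrite lt0n; apply/eqP => e; move: ww0; rewrite /dotv big1 => [/esym/eqP|i _].
    by rewrite oner_eq0.
  by have := ltn_ord i; rewrite {2}e.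
have hfull : Hfull v.
  case: hf0 => _ [_ [p [hp hind]]]; exists p; split => // j.
  by have := (hp j).1; rewrite hP.
have n0 : (0 < n)%N.
  case: hfull => p [hp _]; have [l [_ [l1 _]]] := hp (Ordinal d0).
  rewrite lt0n; apply/eqP => e; move: l1; rewrite big1 => [/esym/eqP|i _].
    by rewrite oner_eq0.
  by have := ltn_ord i; rewrite {2}e.
rewrite hP; apply: contrapT => hnz.
have [u hu] := sep hnz.
case: (@arg_maxP _ R _ (Ordinal n0) xpredT (fun i => dotv u (v i)) isT) => imax _ hmax.
pose a := fun _ : 'I_1 => imax.
have hg : goodH v z a u (dotv u (v imax)).
  split => //.
  - move=> c hc _ i; move: hc; rewrite big_ord1 => hc; by rewrite (ord1 i).
  - by apply/eqP => e; have := hu imax; rewrite e !dotv0l ltxx.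
  - by move=> i; apply: (hmax i).
  - exact: ltW (hu imax).
have [w [c [hfw hwz]]] := rotH (erefl (d - 1)%N) (isT : (0 < 1)%N) d0 hfull hg.
have hfP : facet_halfspace P w c by rewrite hP.
by have := zpos w c hfP; rewrite ltNge hwz.
Qed.
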